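(* (a) If \((X,d)\) is an ultrametric space and \(f\colon[0,\infty)\to[0,\infty)\) is ultrametric-pseudoultrametric-preserving, then either \(f\circ d\) is an ultrametric on \(X\), or there is \(r_0>0\) such that \(f(d(x,y))=0\) holds for all \(x,y\in X\) with \(0<d(x,y)<r_0\). (b) Conversely, suppose \((Y,\rho)\) is a pseudoultrametric space such that \(\rho\) is not an ultrametric and there is \(r_0>0\) such that \(\rho(x,y)=0\) holds whenever \(x,y\in Y\) and \(\rho(x,y)<r_0\). Then there exist an ultrametric-pseudoultrametric-preserving function \(f\colon[0,\infty)\to[0,\infty)\) and an ultrametric \(d\) on \(Y\) such that \(\rho=f\circ d\).
   Context: A pseudoultrametric on a set \(X\) is a symmetric function \(d\colon X\times X\to[0,\infty)\) with \(d(x,x)=0\) for all \(x\in X\) and satisfying \(d(x,y)\le \max\{d(x,z),d(z,y)\}\) for all \(x,y,z\in X\). An ultrametric is a pseudoultrametric with \(d(x,y)=0\) only if \(x=y\). A function \(f\colon[0,\infty)\to[0,\infty)\) is ultrametric-pseudoultrametric-preserving if \(f\circ d\) is a pseudoultrametric for every ultrametric space \((X,d)\). *)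

(* Defs.v *)
From Stdlib Require Import Reals.
Open Scope R_scope.

Definition pseudoultrametric (X : Type) (d : X -> X -> R) : Prop :=
  (forall x y, 0 <= d x y) /\
  (forall x, d x x = 0) /\
  (forall x y, d x y = d y x) /\
  (forall x y z, d x y <= Rmax (d x z) (d z y)).

Definition ultrametric (X : Type) (d : X -> X -> R) : Prop :=
  pseudoultrametric X d /\ (forall x y, d x y = 0 -> x = y).

(* A function f : [0,oo) -> [0,oo), represented as f : R -> R together with
   the condition that it maps [0,oo) into [0,oo) (values on negatives are
   irrelevant). *)
Definition maps_nonneg (f : R -> R) : Prop :=
  forall t, 0 <= t -> 0 <= f t.

Definition upp_preserving (f : R -> R) : Prop :=
  forall (X : Type) (d : X -> X -> R),
    ultrametric X d -> pseudoultrametric X (fun x y => f (d x y)).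

(* Main.v *)
Require Import Defs.
From Stdlib Require Import Reals Lra ClassicalEpsilon Classical.
Open Scope R_scope.

Inductive three : Type := P1 | P2 | P3.

Definition d3 (a b : R) (x y : three) : R :=
  match x, y with
  | P1, P1 | P2, P2 | P3, P3 => 0
  | P1, P2 | P2, P1 => a
  | _, _ => b
  end.

Lemma d3_ultra a b : 0 < a -> a <= b -> ultrametric three (d3 a b).
Proof.
  intros Ha Hab. split; [split; [|split; [|split]]|].
  - intros [] []; simpl; lra.
  - intros []; reflexivity.
  - intros [] []; reflexivity.
  - intros [] [] []; simpl; unfold Rmax; repeat destruct Rle_dec; lra.
  - intros [] []; simpl; intros; try reflexivity; lra.
Qed.

Lemma upp_mono f : upp_preserving f -> forall a b, 0 < a -> a <= b -> f a <= f b.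
Proof.
  intros H a b Ha Hab.
  destruct (H _ _ (d3_ultra a b Ha Hab)) as [_ [_ [_ T]]].
  specialize (T P1 P2 P3). simpl in T. unfold Rmax in T.
  destruct Rle_dec; lra.
Qed.

Lemma part_b_f (c : R) : 0 < c ->
  upp_preserving (fun t => if Rle_dec t c then 0 else t).
Proof.
  intros Hc X d [[H1 [H2 [H3 H4]]] _]. split; [|split; [|split]].
  - intros x y; simpl. destruct Rle_dec; [lra|apply H1].
  - intros x; simpl; rewrite H2; destruct Rle_dec; lra.
  - intros x y; simpl; rewrite H3; reflexivity.
  - intros x y z; simpl. specialize (H4 x y z). revert H4.
    unfold Rmax. repeat destruct Rle_dec; lra.
Qed.

Theorem proposition2p5 :
  (forall (X : Type) (d : X -> X -> R) (f : R -> R),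
      ultrametric X d -> maps_nonneg f -> upp_preserving f ->
      ultrametric X (fun x y => f (d x y)) \/
      exists r0, 0 < r0 /\
        forall x y, 0 < d x y -> d x y < r0 -> f (d x y) = 0)
  /\
  (forall (Y : Type) (rho : Y -> Y -> R),
      pseudoultrametric Y rho -> ~ ultrametric Y rho ->
      (exists r0, 0 < r0 /\ forall x y, rho x y < r0 -> rho x y = 0) ->
      exists (f : R -> R) (d : Y -> Y -> R),
        maps_nonneg f /\ upp_preserving f /\ ultrametric Y d /\
        forall x y, rho x y = f (d x y)).
Proof.
  split.
  - intros X d f Hd Hf Hu.
    destruct (classic (exists t, 0 < t /\ f t = 0)) as [[t0 [Ht0 Ft0]]|Hn].
    + right. exists t0. split; [exact Ht0|].
      intros x y Hp Hlt.
      pose proof (upp_mono f Hu (d x y) t0 Hp (Rlt_le _ _ Hlt)).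
      pose proof (Hf (d x y) (Rlt_le _ _ Hp)). lra.
    + left. split; [apply Hu; exact Hd|].
      intros x y Hxy.
      destruct Hd as [[H1 _] Hsep].
      destruct (Req_dec (d x y) 0) as [E|E]; [apply Hsep; exact E|].
      exfalso. apply Hn. exists (d x y). split; [|exact Hxy].
      specialize (H1 x y). lra.
  - intros Y rho [H1 [H2 [H3 H4]]] _ [r0 [Hr0 Hgap]].
    set (c := r0 / 2).
    assert (Hc : 0 < c) by (unfold c; lra).
    assert (Hcr : c < r0) by (unfold c; lra). clearbody c.
    exists (fun t => if Rle_dec t c then 0 else t).
    exists (fun x y => if excluded_middle_informative (x = y) then 0 else Rmax (rho x y) c).
    split; [|split; [|split]].
    + intros t Ht; simpl; destruct Rle_dec; lra.
    + apply part_b_f; exact Hc.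
    + split; [split; [|split; [|split]]|].
      * intros x y; destruct excluded_middle_informative; [lra|].
        unfold Rmax; destruct Rle_dec; lra.
      * intros x; destruct excluded_middle_informative; [reflexivity|congruence].
      * intros x y.
        destruct (excluded_middle_informative (x = y)) as [e|n];
        destruct (excluded_middle_informative (y = x)) as [e'|n'];
          try congruence; rewrite H3; reflexivity.
      * intros x y z.
        destruct (excluded_middle_informative (x = y)) as [e|n].
        { destruct (excluded_middle_informative (x = z));
          destruct (excluded_middle_informative (z = y));
          unfold Rmax; repeat destruct Rle_dec; try lra;
          pose proof (H1 x z); pose proof (H1 z y); lra. }
        destruct (excluded_middle_informative (x = z)) as [e1|n1].
        { subst z. destruct (excluded_middle_informative (x = x)); [|congruence].
          destruct (excluded_middle_informative (x = y)); [congruence|].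
          unfold Rmax at 2; destruct Rle_dec; [apply Rle_refl|].
          pose proof (H1 x y). unfold Rmax in *; repeat destruct Rle_dec; lra. }
        destruct (excluded_middle_informative (z = y)) as [e2|n2].
        { subst z. unfold Rmax at 2; destruct Rle_dec;
          pose proof (H1 x y); unfold Rmax in *; repeat destruct Rle_dec; lra. }
        specialize (H4 x y z). pose proof (H1 x z). pose proof (H1 z y).
        pose proof (H1 x y). revert H4. unfold Rmax; repeat destruct Rle_dec; lra.
      * intros x y. destruct excluded_middle_informative; [auto|].
        unfold Rmax; destruct Rle_dec; lra.
    + intros x y. destruct excluded_middle_informative as [e|n].
      * subst y. rewrite H2. destruct Rle_dec; lra.
      * pose proof (H1 x y).
        destruct (Rlt_dec (rho x y) r0) as [L|L].
        -- pose proof (Hgap x y L) as E. rewrite E.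
           unfold Rmax; repeat destruct Rle_dec; lra.
        -- unfold Rmax; repeat destruct Rle_dec; lra.
Qed.
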